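(* Let $m,n\ge 2$. The Hadamard product of two $m$th order $n$-dimensional complete Hankel tensors is a complete Hankel tensor.
   Context: For $w\in\mathbb{R}^n$, $w^m$ is the tensor with entries $w_{i_1}\cdots w_{i_m}$. A Vandermonde vector is $(1,u,u^2,\dots,u^{n-1})^\top$ with $u\in\mathbb{R}$. A real $m$th order $n$-dimensional tensor $\mathcal{A}$ is a complete Hankel tensor if it has a positive Vandermonde decomposition, i.e. $\mathcal{A}=\sum_{k=1}^r\alpha_k(u_k)^m$ with $\alpha_k>0$, $u_k=(1,u_k,\dots,u_k^{n-1})^\top$ Vandermonde vectors, and $u_1,\dots,u_r$ pairwise distinct. The Hadamard product of $\mathcal{A}=(a_{i_1\cdots i_m})$ and $\mathcal{B}=(b_{i_1\cdots i_m})$ is $(a_{i_1\cdots i_m}b_{i_1\cdots i_m})$. *)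

(* Defs.v *)
From HB Require Import structures.
From mathcomp Require Import all_boot all_order all_algebra.
From mathcomp Require Import reals.
Set Implicit Arguments. Unset Strict Implicit. Unset Printing Implicit Defensive.
Import Order.TTheory GRing.Theory Num.Theory.
Local Open Scope ring_scope.

Definition tensor (R : realType) (m n : nat) := ('I_m -> 'I_n) -> R.

Definition tpow (R : realType) (m n : nat) (w : 'I_n -> R) : tensor R m n :=
  fun idx => \prod_(k < m) w (idx k).

Definition vdm (R : realType) (n : nat) (u : R) : 'I_n -> R :=
  fun i => u ^+ (i : nat).

(* Positive Vandermonde decomposition: A = sum_{k=1}^r alpha_k (u_k)^m,
   alpha_k > 0, u_k pairwise distinct. *)
Definition complete_hankel (R : realType) (m n : nat) (A : tensor R m n) : Prop :=
  exists (r : nat) (alpha u : 'I_r -> R),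
    (0 < r)%N /\ (forall k, 0 < alpha k) /\ injective u /\
    A = (fun idx => \sum_(k < r) alpha k * @tpow R m n (@vdm R n (u k)) idx).

Definition hadamard (R : realType) (m n : nat) (A B : tensor R m n) : tensor R m n :=
  fun idx => A idx * B idx.

(* Main.v *)
Require Import Defs.
From mathcomp Require Import all_boot all_order all_algebra.
From mathcomp Require Import reals.
From Stdlib Require Import FunctionalExtensionality.
Import Order.TTheory GRing.Theory Num.Theory.
Local Open Scope ring_scope.

Lemma merge (R : realType) (m n : nat) (J : finType) (j0 : J) (c w : J -> R) :
  (forall j, 0 < c j) ->
  complete_hankel (fun idx => \sum_(j : J) c j * @tpow R m n (@vdm R n (w j)) idx).
Proof.
move=> cpos.
set s := undup [seq w j | j <- enum J].
have ins j : w j \in s by rewrite mem_undup; apply: map_f; rewrite mem_enum.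
have us : uniq s by apply: undup_uniq.
pose p (j : J) : 'I_(size s) := Ordinal (etrans (index_mem _ _) (ins j)).
exists (size s), (fun k => \sum_(j | p j == k) c j), (fun k => nth 0 s k).
split; first by have := ins j0; case: (s).
split.
  move=> k.
  have kin : nth 0 s k \in s by apply: mem_nth.
  move: kin; rewrite mem_undup => /mapP [j _ wj].
  have pj : p j = k.
    apply: val_inj => /=; rewrite -wj index_uniq //.
  rewrite (bigD1 j) ?pj //=.
  apply: ltr_wpDr; first by apply: sumr_ge0 => i _; apply: ltW.
  exact: cpos.
split.
  move=> k1 k2 /eqP; rewrite nth_uniq // => /eqP; apply: val_inj.
apply: functional_extensionality => idx.
rewrite (partition_big p xpredT) //=.
apply: eq_bigr => k _.
rewrite mulr_suml; apply: eq_bigr => j /eqP <-.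
by rewrite /= nth_index.
Qed.

Lemma tpowM (R : realType) (m n : nat) x y idx :
  @tpow R m n (@vdm R n x) idx * @tpow R m n (@vdm R n y) idx =
  @tpow R m n (@vdm R n (x * y)) idx.
Proof. by rewrite /tpow -big_split; apply: eq_bigr => k _; rewrite /vdm exprMn. Qed.

Theorem proposition3 (R : realType) (m n : nat) (A B : tensor R m n) :
  (2 <= m)%N -> (2 <= n)%N ->
  complete_hankel A -> complete_hankel B -> complete_hankel (hadamard A B).
Proof.
move=> _ _ [r [a [u [r0 [apos [_ ->]]]]]] [r' [b [v [r0' [bpos [_ ->]]]]]].
have j0 : ('I_r * 'I_r')%type by split; [exact: Ordinal r0 | exact: Ordinal r0'].
have -> : hadamard (fun idx => \sum_(k < r) a k * tpow (vdm (u k)) idx)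
   (fun idx => \sum_(k < r') b k * tpow (vdm (v k)) idx) =
  (fun idx => \sum_(j : 'I_r * 'I_r') (a j.1 * b j.2) *
        @tpow R m n (@vdm R n (u j.1 * v j.2)) idx).
  apply: functional_extensionality => idx.
  rewrite /hadamard mulr_suml.
  rewrite (eq_bigr (fun i => \sum_(k < r') (a i * b k) * tpow (vdm (u i * v k)) idx)).
    by rewrite pair_big.
  move=> i _; rewrite mulr_sumr; apply: eq_bigr => k _.
  by rewrite -tpowM mulrACA.
apply: (@merge R m n _ j0 (fun j => a j.1 * b j.2) (fun j => u j.1 * v j.2)) => j; exact: mulr_gt0.
Qed.
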